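(* If an atomic flow $A$ is normal for $\mathsf w$ and $A\to_{\mathsf c}^\star B$, then $B$ is normal for $\mathsf w$.
   Context: An atomic flow is a tuple $(V,E,\eta,up,lo)$: finite sets of vertices and edges, a labelling of vertices by interaction, cut, weakening, coweakening, contraction or cocontraction, and maps $up:E\to V\cup\{\top\}$, $lo:E\to V\cup\{\bot\}$. Upper edges of $\nu$: $lo(\epsilon)=\nu$; lower edges: $up(\epsilon)=\nu$. (Upper, lower) edge numbers: $(0,2)$ interaction, $(2,0)$ cut, $(0,1)$ weakening, $(1,0)$ coweakening, $(2,1)$ contraction, $(1,2)$ cocontraction; no directed cycles; there is $\pi:E\to\{+,-\}$ giving all edges of a (co)contraction the same sign and the two edges of an interaction/cut different signs. A flow is normal for $\mathsf w$ if none of the following patterns occurs in it: a weakening whose lower edge is an upper edge of a contraction, of a cut, or is the upper edge of a cocontraction or of a coweakening; a coweakening whose upper edge is a lower edge of a cocontraction, of an interaction, or is the lower edge of a contraction. $\to_{\mathsf c}^\star$ is the reflexive-transitive closure of $\to_{\mathsf c}$, where $A\to_{\mathsf c}B$ means $B$ results from $A$ by one of these subgraph replacements: (c1) a contraction with upper edges $\epsilon_1,\epsilon_2$ whose lower edge is an upper edge of a cut with other upper edge $\epsilon_3$: replace by a new cocontraction with upper edge $\epsilon_3$ and new lower edges $\delta_1,\delta_2$, and two new cuts with upper edges $\{\epsilon_1,\delta_1\}$ and $\{\epsilon_2,\delta_2\}$; (c2) an interaction with lower edges $\epsilon_3,\epsilon_4$ where $\epsilon_4$ is the upper edge of a cocontraction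 with lower edges $\epsilon_1,\epsilon_2$: replace by a new contraction with lower edge $\epsilon_3$ and new upper edges $\delta_1,\delta_2$, and two new interactions with lower edges $\{\epsilon_1,\delta_1\}$ and $\{\epsilon_2,\delta_2\}$; (c3) a contraction with upper edges $\epsilon_1,\epsilon_2$ whose lower edge is the upper edge of a cocontraction with lower edges $\epsilon_3,\epsilon_4$: replace by cocontractions $\kappa_1,\kappa_2$ with upper edges $\epsilon_1,\epsilon_2$, contractions $\gamma_3,\gamma_4$ with lower edges $\epsilon_3,\epsilon_4$, and four new edges, one from each $\kappa_i$ to each $\gamma_j$. *)

(* Defs.v *)
From HB Require Import structures.
From mathcomp Require Import all_boot.
Set Implicit Arguments. Unset Strict Implicit. Unset Printing Implicit Defensive.

Inductive kind := Int | Cut | Wk | Cowk | Ctr | Coctr.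

Definition kind_eq_dec : forall x y : kind, {x = y} + {x <> y}.
Proof. decide equality. Defined.
HB.instance Definition _ := comparableMixin kind_eq_dec.

(* (number of upper edges, number of lower edges) *)
Definition arity (k : kind) : nat * nat :=
  match k with
  | Int => (0, 2) | Cut => (2, 0) | Wk => (0, 1) | Cowk => (1, 0)
  | Ctr => (2, 1) | Coctr => (1, 2)
  end.

(* A (pre)flow: vertices and edges are natural-number names listed in fV, fE.
   up e = None means up(e) = top, lo e = None means lo(e) = bottom.
   lab / up / lo are only meaningful on fV / fE. *)
Record flow := Flow {
  fV : seq nat;
  fE : seq nat;
  lab : nat -> kind;
  up : nat -> option nat;
  lo : nat -> option nat }.

Definition upper_edges (A : flow) (v : nat) := [seq e <- fE A | lo A e == Some v].
Definition lower_edges (A : flow) (v : nat) := [seq e <- fE A | up A e == Some v].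

Definition follows (A : flow) (e e' : nat) : bool :=
  (lo A e != None) && (lo A e == up A e').

Definition atomic_flow (A : flow) : Prop :=
  uniq (fV A) /\ uniq (fE A) /\
  (forall e v, e \in fE A -> up A e = Some v -> v \in fV A) /\
  (forall e v, e \in fE A -> lo A e = Some v -> v \in fV A) /\
  (forall v, v \in fV A ->
     size (upper_edges A v) = (arity (lab A v)).1 /\
     size (lower_edges A v) = (arity (lab A v)).2) /\
  (forall s : seq nat, s != [::] -> all (fun e => e \in fE A) s ->
     ~~ cycle (follows A) s) /\
  (exists pi : nat -> bool,
    forall v, v \in fV A ->
      (lab A v = Ctr \/ lab A v = Coctr ->
         forall e1 e2, e1 \in upper_edges A v ++ lower_edges A v ->
                       e2 \in upper_edges A v ++ lower_edges A v ->
                       pi e1 = pi e2) /\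
      (lab A v = Int \/ lab A v = Cut ->
         forall e1 e2, e1 \in upper_edges A v ++ lower_edges A v ->
                       e2 \in upper_edges A v ++ lower_edges A v ->
                       e1 != e2 -> pi e1 != pi e2)).

Definition normal_w (A : flow) : Prop :=
  (forall e w v, e \in fE A -> up A e = Some w -> lo A e = Some v ->
     lab A w = Wk ->
     ~ (lab A v = Ctr \/ lab A v = Cut \/ lab A v = Coctr \/ lab A v = Cowk)) /\
  (forall e c v, e \in fE A -> lo A e = Some c -> up A e = Some v ->
     lab A c = Cowk ->
     ~ (lab A v = Coctr \/ lab A v = Int \/ lab A v = Ctr)).

(* B results from A by deleting vertices dV and edges dE, adding fresh
   vertices nV (with labels) and fresh edges nE (with their up/lo), and
   redirecting the old edges listed in md (with their new up/lo);
   everything else is unchanged. *)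
Definition replaced (A B : flow) (dV dE : seq nat) (nV : seq (nat * kind))
    (nE md : seq (nat * option nat * option nat)) : Prop :=
  (uniq (map fst nV) /\ all (fun v => v \notin fV A) (map fst nV)) /\
  (uniq (map (fun t => t.1.1) nE) /\
     all (fun e => e \notin fE A) (map (fun t => t.1.1) nE)) /\
  (forall v, (v \in fV B) = ((v \in fV A) && (v \notin dV)) || (v \in map fst nV)) /\
  (forall v, v \in fV A -> v \notin dV -> lab B v = lab A v) /\
  (forall v k, (v, k) \in nV -> lab B v = k) /\
  (forall e, (e \in fE B) =
     ((e \in fE A) && (e \notin dE)) || (e \in map (fun t => t.1.1) nE)) /\
  (forall e u l, (e, u, l) \in nE ++ md -> up B e = u /\ lo B e = l) /\
  (forall e, e \in fE A -> e \notin dE -> e \notin map (fun t => t.1.1) md ->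
     up B e = up A e /\ lo B e = lo A e).

(* (c1) a contraction whose lower edge is an upper edge of a cut *)
Definition c1_step (A B : flow) : Prop :=
  exists g k e1 e2 e e3,
    g \in fV A /\ k \in fV A /\ lab A g = Ctr /\ lab A k = Cut /\
    e1 \in fE A /\ e2 \in fE A /\ e \in fE A /\ e3 \in fE A /\
    e1 != e2 /\ lo A e1 = Some g /\ lo A e2 = Some g /\ up A e = Some g /\
    lo A e = Some k /\ e3 != e /\ lo A e3 = Some k /\
    exists k' c1 c2 d1 d2,
      replaced A B [:: g; k] [:: e] [:: (k', Coctr); (c1, Cut); (c2, Cut)]
        [:: (d1, Some k', Some c1); (d2, Some k', Some c2)]
        [:: (e1, up A e1, Some c1); (e2, up A e2, Some c2);
            (e3, up A e3, Some k')].

(* (c2) an interaction one of whose lower edges is the upper edge of a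
   cocontraction *)
Definition c2_step (A B : flow) : Prop :=
  exists i k e3 e4 e1 e2,
    i \in fV A /\ k \in fV A /\ lab A i = Int /\ lab A k = Coctr /\
    e1 \in fE A /\ e2 \in fE A /\ e3 \in fE A /\ e4 \in fE A /\
    e3 != e4 /\ up A e3 = Some i /\ up A e4 = Some i /\ lo A e4 = Some k /\
    e1 != e2 /\ up A e1 = Some k /\ up A e2 = Some k /\
    exists g i1 i2 d1 d2,
      replaced A B [:: i; k] [:: e4] [:: (g, Ctr); (i1, Int); (i2, Int)]
        [:: (d1, Some i1, Some g); (d2, Some i2, Some g)]
        [:: (e3, Some g, lo A e3); (e1, Some i1, lo A e1);
            (e2, Some i2, lo A e2)].

(* (c3) a contraction whose lower edge is the upper edge of a cocontraction *)
Definition c3_step (A B : flow) : Prop :=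
  exists g k e1 e2 e e3 e4,
    g \in fV A /\ k \in fV A /\ lab A g = Ctr /\ lab A k = Coctr /\
    e1 \in fE A /\ e2 \in fE A /\ e \in fE A /\ e3 \in fE A /\ e4 \in fE A /\
    e1 != e2 /\ lo A e1 = Some g /\ lo A e2 = Some g /\ up A e = Some g /\
    lo A e = Some k /\ e3 != e4 /\ up A e3 = Some k /\ up A e4 = Some k /\
    exists k1 k2 g3 g4 f13 f14 f23 f24,
      replaced A B [:: g; k] [:: e]
        [:: (k1, Coctr); (k2, Coctr); (g3, Ctr); (g4, Ctr)]
        [:: (f13, Some k1, Some g3); (f14, Some k1, Some g4);
            (f23, Some k2, Some g3); (f24, Some k2, Some g4)]
        [:: (e1, up A e1, Some k1); (e2, up A e2, Some k2);
            (e3, Some g3, lo A e3); (e4, Some g4, lo A e4)].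

Definition c_step (A B : flow) : Prop := c1_step A B \/ c2_step A B \/ c3_step A B.

Inductive c_star : flow -> flow -> Prop :=
  | c_star_refl A : c_star A A
  | c_star_step A B C : c_step A B -> c_star B C -> c_star A C.

(* Main.v *)
Require Import Defs.
From mathcomp Require Import all_boot.
Set Warnings "-notation-overridden,-spurious-ssr-injection".

Definition atmost (n : nat) (P : pred nat) := forall s, uniq s -> all P s -> size s <= n.

Definition Inv (A : flow) : Prop :=
  (forall e v, e \in fE A -> up A e = Some v -> v \in fV A) /\
  (forall e v, e \in fE A -> lo A e = Some v -> v \in fV A) /\
  (forall v, v \in fV A ->
     atmost (arity (lab A v)).1 (fun e => (e \in fE A) && (lo A e == Some v)) /\
     atmost (arity (lab A v)).2 (fun e => (e \in fE A) && (up A e == Some v))) /\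
  (forall e v, e \in fE A -> lo A e = Some v -> up A e <> Some v).

Lemma atmost_in n P s x : atmost n P -> uniq s -> all P s -> size s = n -> P x -> x \in s.
Proof.
move=> H us As ss Px; apply/negPn/negP => xs.
have := H (x :: s); rewrite /= xs us Px As ss => /(_ isT isT).
by rewrite ltnn.
Qed.

Lemma atmost_sub n (P Q : pred nat) : atmost n P -> (forall x, Q x -> P x) -> atmost n Q.
Proof.
move=> H QP s us As; apply: H => //; apply/allP => x xs; apply: QP; exact: (allP As).
Qed.

Lemma Inv_atomic A : atomic_flow A -> Inv A.
Proof.
case=> uV [uE [Eu [El [Ar [Ac _]]]]].
split=> //; split=> //; split.
  move=> v vA; have [a1 a2] := Ar v vA; split => s us As.
    rewrite -a1; apply: uniq_leq_size => // x xs.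
    by have := allP As x xs; rewrite /upper_edges mem_filter andbC.
  rewrite -a2; apply: uniq_leq_size => // x xs.
  by have := allP As x xs; rewrite /lower_edges mem_filter andbC.
move=> e v eA le ue.
have := Ac [:: e] isT; rewrite /= eA /follows le ue /= => /(_ isT).
by rewrite eqxx.
Qed.

Section Gen.
Variables (A B : flow) (dV dE : seq nat) (nV : seq (nat * kind))
  (nE md : seq (nat * option nat * option nat)).

Lemma classify :
  replaced A B dV dE nV nE md -> forall x, x \in fE B ->
  (x \in fE A /\ x \notin dE /\ x \notin map (fun t => t.1.1) md /\
     up B x = up A x /\ lo B x = lo A x) \/
  (exists u l, (x, u, l) \in nE ++ md /\ up B x = u /\ lo B x = l).
Proof.
case=> _ [_ [_ [_ [_ [hE [hT hU]]]]]] x; rewrite hE.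
case/orP.
  case/andP=> xA xd.
  case xm: (x \in map (fun t => t.1.1) md).
    right; case/mapP: xm => [[[y u] l] tm /= ->]; exists u, l.
    have tin : (y, u, l) \in nE ++ md by rewrite mem_cat tm orbT.
    by have [] := hT _ _ _ tin.
  by left; have [] := hU x xA xd (negbT xm).
case/mapP=> [[[y u] l] tm /= ->]; right; exists u, l.
have tin : (y, u, l) \in nE ++ md by rewrite mem_cat tm.
by have [] := hT _ _ _ tin.
Qed.
End Gen.

Definition TripOK (A B : flow) (dV : seq nat) (nV : seq (nat * kind)) x u l :=
     (forall v, u = Some v -> ((v \in fV A) && (v \notin dV) /\ x \in fE A /\ up A x = Some v) \/ v \in map fst nV) /\
     (forall v, l = Some v -> ((v \in fV A) && (v \notin dV) /\ x \in fE A /\ lo A x = Some v) \/ v \in map fst nV) /\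
     (forall v, u = Some v -> l <> Some v) /\
     (forall w v, u = Some w -> l = Some v ->
        (lab B w = Wk -> ~ (lab B v = Ctr \/ lab B v = Cut \/ lab B v = Coctr \/ lab B v = Cowk)) /\
        (lab B v = Cowk -> ~ (lab B w = Coctr \/ lab B w = Int \/ lab B w = Ctr))).

Lemma replaced_ok A B dV dE nV nE md :
  Inv A -> normal_w A -> replaced A B dV dE nV nE md ->
  (forall x v, x \in fE A -> (up A x = Some v \/ lo A x = Some v) -> v \in dV ->
      (x \in dE) \/ (x \in map (fun t => t.1.1) md)) ->
  (forall x u l, (x, u, l) \in nE ++ md -> TripOK A B dV nV x u l) ->
  (forall n k, (n, k) \in nV -> exists Ll Lu : seq nat,
      size Ll <= (arity k).1 /\ size Lu <= (arity k).2 /\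
      (forall x u l, (x, u, l) \in nE ++ md -> l = Some n -> x \in Ll) /\
      (forall x u l, (x, u, l) \in nE ++ md -> u = Some n -> x \in Lu)) ->
  Inv B /\ normal_w B.
Proof.
move=> [Eu [El [Ar Sl]]] [N1 N2] rp H1 HT HN.
have cl := @classify A B dV dE nV nE md rp.
case: rp => [[unV frV] [[unE frE] [hV [hlab [hlabn [hE [hT hU]]]]]]].
have newA v : v \in map fst nV -> v \notin fV A by move=> vn; exact: (allP frV v vn).
have notd x v : x \in fE A -> x \notin dE -> x \notin map (fun t => t.1.1) md ->
   (up A x = Some v \/ lo A x = Some v) -> v \notin dV.
  move=> xA xd xm h; apply/negP => vd; case: (H1 x v xA h vd) => h'.
    by rewrite h' in xd. by rewrite h' in xm.
have oldB v : v \in fV A -> v \notin dV -> v \in fV B by move=> ??; rewrite hV; apply/orP; left; apply/andP.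
have newB v : v \in map fst nV -> v \in fV B by move=> ?; rewrite hV; apply/orP; right.
split; last split.
- split; [|split; [|split]].
  + move=> x v xB ux; case: (cl x xB).
      move=> [xA [xd [xm [ub lb]]]]; rewrite ub in ux.
      apply: oldB; first exact: Eu ux.
      by apply: (notd x) => //; left.
    move=> [u [l [tin [ub lb]]]]; have [ha _] := HT _ _ _ tin.
    rewrite ub in ux; case: (ha v ux) => [[/andP[??] _]|]; [exact: oldB | exact: newB].
  + move=> x v xB ux; case: (cl x xB).
      move=> [xA [xd [xm [ub lb]]]]; rewrite lb in ux.
      apply: oldB; first exact: El ux.
      by apply: (notd x) => //; right.
    move=> [u [l [tin [ub lb]]]]; have [_ [ha _]] := HT _ _ _ tin.
    rewrite lb in ux; case: (ha v ux) => [[/andP[??] _]|]; [exact: oldB | exact: newB].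
  + move=> v vB.
    case vn: (v \in map fst nV).
      case/mapP: vn => [[n k] nin /= vE]; subst v.
      rewrite (hlabn _ _ nin).
      have [Ll [Lu [sl [su [hl hu]]]]] := HN _ _ nin.
      split=> s us As.
        apply: leq_trans sl; apply: uniq_leq_size => // x xs.
        case/andP: (allP As x xs) => xB /eqP lx.
        case: (cl x xB).
          move=> [xA [_ [_ [_ lb]]]]; rewrite lb in lx.
          have := newA n (map_f fst nin); by rewrite (El _ _ xA lx).
        move=> [u [l [tin [ub lb]]]]; apply: (hl _ u l tin); by rewrite -lb.
      apply: leq_trans su; apply: uniq_leq_size => // x xs.
      case/andP: (allP As x xs) => xB /eqP lx.
      case: (cl x xB).
        move=> [xA [_ [_ [ub _]]]]; rewrite ub in lx.
        have := newA n (map_f fst nin); by rewrite (Eu _ _ xA lx).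
      move=> [u [l [tin [ub lb]]]]; apply: (hu _ u l tin); by rewrite -ub.
    move: vB; rewrite hV vn orbF => /andP[vA vd].
    rewrite (hlab _ vA vd); have [a1 a2] := Ar v vA; split.
      eapply atmost_sub; first exact: a1; move=> x /andP[xB /eqP lx]; apply/andP.
      case: (cl x xB).
        move=> [xA [_ [_ [_ lb]]]]; by rewrite -lb lx.
      move=> [u [l [tin [ub lb]]]]; have [_ [ha _]] := HT _ _ _ tin.
      rewrite lb in lx; case: (ha v lx) => [[_ [-> ->]] //|].
      by rewrite vn.
    eapply atmost_sub; first exact: a2; move=> x /andP[xB /eqP lx]; apply/andP.
    case: (cl x xB).
      move=> [xA [_ [_ [ub _]]]]; by rewrite -ub lx.
    move=> [u [l [tin [ub lb]]]]; have [ha _] := HT _ _ _ tin.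
    rewrite ub in lx; case: (ha v lx) => [[_ [-> ->]] //|].
    by rewrite vn.
  + move=> x v xB lx; case: (cl x xB).
      move=> [xA [_ [_ [ub lb]]]]; rewrite ub; rewrite lb in lx; exact: Sl lx.
    move=> [u [l [tin [ub lb]]]]; have [_ [_ [hs _]]] := HT _ _ _ tin.
    rewrite ub => uv; rewrite lb in lx; exact: hs uv lx.
- move=> x w v xB ux lx.
  case: (cl x xB).
    move=> [xA [xd [xm [ub lb]]]]; rewrite ub in ux; rewrite lb in lx.
    have wA := Eu _ _ xA ux; have vA := El _ _ xA lx.
    have wd : w \notin dV by apply: (notd x) => //; left.
    have vd : v \notin dV by apply: (notd x) => //; right.
    rewrite (hlab _ wA wd) (hlab _ vA vd); exact: N1 xA ux lx.
  move=> [u [l [tin [ub lb]]]]; have [_ [_ [_ hn]]] := HT _ _ _ tin.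
  rewrite ub in ux; rewrite lb in lx; exact: (hn w v ux lx).1.
- move=> x c v xB lx ux.
  case: (cl x xB).
    move=> [xA [xd [xm [ub lb]]]]; rewrite ub in ux; rewrite lb in lx.
    have wA := Eu _ _ xA ux; have vA := El _ _ xA lx.
    have wd : v \notin dV by apply: (notd x) => //; left.
    have vd : c \notin dV by apply: (notd x) => //; right.
    rewrite (hlab _ wA wd) (hlab _ vA vd); exact: N2 xA lx ux.
  move=> [u [l [tin [ub lb]]]]; have [_ [_ [_ hn]]] := HT _ _ _ tin.
  rewrite ub in ux; rewrite lb in lx; exact: (hn v c ux lx).2.
Qed.

Set Implicit Arguments. Unset Strict Implicit.

Lemma atm0 (P : pred nat) x : atmost 0 P -> P x -> False.
Proof. move=> H Px; have := H [:: x] isT; by rewrite /= Px => /(_ isT). Qed.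
Lemma atm1 (P : pred nat) a x : atmost 1 P -> P a -> P x -> x = a.
Proof.
move=> H Pa Px; have := @atmost_in 1 P [:: a] x H isT; rewrite /= Pa /= => /(_ isT erefl Px).
by rewrite inE => /eqP.
Qed.
Lemma atm2 (P : pred nat) a b x : atmost 2 P -> a != b -> P a -> P b -> P x -> x = a \/ x = b.
Proof.
move=> H ab Pa Pb Px; have := @atmost_in 2 P [:: a; b] x H; rewrite /= inE ab Pa Pb /=.
by move=> /(_ isT isT erefl Px); rewrite !inE => /orP[/eqP|/eqP]; [left|right].
Qed.

Ltac trips tin := rewrite /= !inE in tin;
  repeat (case/orP: tin => [/eqP[? ? ?]|tin]; [subst|]); try (move/eqP: tin => [? ? ?]; subst).

Ltac fin U1 U2 U3 U4 F1 F2 F3 F4 := let h := fresh in move=> h; first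
 [ by rewrite !inE !eqxx ?orbT
 | by case: h => h; congruence
 | by have /andP[] := U1 _ h; rewrite ?(negbTE F1) ?(negbTE F2) ?(negbTE F3) ?(negbTE F4)
 | by have /andP[] := U2 _ h; rewrite ?(negbTE F1) ?(negbTE F2) ?(negbTE F3) ?(negbTE F4)
 | by have /andP[] := U3 _ h; rewrite ?(negbTE F1) ?(negbTE F2) ?(negbTE F3) ?(negbTE F4)
 | by have /andP[] := U4 _ h; rewrite ?(negbTE F1) ?(negbTE F2) ?(negbTE F3) ?(negbTE F4) ].

Lemma c1_ok A B : Inv A -> normal_w A -> c1_step A B -> Inv B /\ normal_w B.
Proof.
move=> IA NA [g [k [e1 [e2 [e [e3 [gA [kA [lg [lk [e1A [e2A [eA [e3A [e12 [le1 [le2 [ue [le [e3e [le3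
  [kk [c1 [c2 [d1 [d2 rp]]]]]]]]]]]]]]]]]]]]]]]]]].
have IA' := IA; case: IA' => [Eu [El [Ar Sl]]].
have NA' := NA; case: NA' => [N1 N2].
have rp' := rp.
case: rp' => [[unV frV] [[unE frE] [hV [hlab [hlabn [hE [hT hU]]]]]]].
have [ag1 ag2] := Ar g gA; rewrite lg /= in ag1 ag2.
have [ak1 ak2] := Ar k kA; rewrite lk /= in ak1 ak2.
have lkk : lab B kk = Coctr by apply: hlabn; rewrite !inE !eqxx ?orbT.
have lc1 : lab B c1 = Cut by apply: hlabn; rewrite !inE !eqxx ?orbT.
have lc2 : lab B c2 = Cut by apply: hlabn; rewrite !inE !eqxx ?orbT.
have fr v : v \in [:: kk; c1; c2] -> v \notin fV A by move=> vn; exact: (allP frV v vn).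
have kkA : kk \notin fV A by apply: fr; rewrite !inE eqxx.
have c1A : c1 \notin fV A by apply: fr; rewrite !inE eqxx orbT.
have c2A : c2 \notin fV A by apply: fr; rewrite !inE eqxx !orbT.
move: unV; rewrite /= !inE negb_or => /andP[/andP[kc1 kc2] /andP[c12 _]].
have gk : g != k by apply/eqP=> gk; rewrite gk lk in lg.
have ue1 v : up A e1 = Some v -> (v \in fV A) && (v \notin [:: g; k]).
  move=> h; rewrite (Eu _ _ e1A h) /= !inE negb_or; apply/andP; split.
    by apply/eqP=> vg; subst v; exact: (Sl _ _ e1A le1 h).
  apply/eqP=> vk; subst v; apply: (atm0 ak2 (x := e1)); by rewrite /= e1A h eqxx.
have ue2 v : up A e2 = Some v -> (v \in fV A) && (v \notin [:: g; k]).
  move=> h; rewrite (Eu _ _ e2A h) /= !inE negb_or; apply/andP; split.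
    by apply/eqP=> vg; subst v; exact: (Sl _ _ e2A le2 h).
  apply/eqP=> vk; subst v; apply: (atm0 ak2 (x := e2)); by rewrite /= e2A h eqxx.
have ue3 v : up A e3 = Some v -> (v \in fV A) && (v \notin [:: g; k]).
  move=> h; rewrite (Eu _ _ e3A h) /= !inE negb_or; apply/andP; split.
    apply/eqP=> vg; subst v; move/eqP: e3e; apply.
    by apply: (atm1 ag2 (a := e)); rewrite /= ?eA ?e3A ?ue ?h ?eqxx.
  by apply/eqP=> vk; subst v; exact: (Sl _ _ e3A le3 h).
have labo v : (v \in fV A) && (v \notin [:: g; k]) -> lab B v = lab A v.
  by case/andP=> ??; apply: hlab.
eapply replaced_ok; [exact: IA|exact: NA|exact: rp| | | ].
- move=> x v xA hx; rewrite !inE => /orP[] /eqP ?; subst v; case: hx => hx.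
  + by left; apply/eqP; apply: (atm1 ag2); rewrite /= ?eA ?ue ?xA ?hx ?eqxx.
  + right; case: (atm2 ag1 e12 (x := x)); rewrite /= ?e1A ?le1 ?e2A ?le2 ?xA ?hx ?eqxx //= => ->;
      by rewrite ?eqxx ?orbT.
  + by exfalso; apply: (atm0 ak2 (x := x)); rewrite /= xA hx eqxx.
  + case: (atm2 ak1 e3e (x := x)); rewrite /= ?e3A ?le3 ?eA ?le ?xA ?hx ?eqxx //= => ->.
      by right; rewrite ?eqxx ?orbT.
    by left.
- move=> x u l tin; trips tin.
  + split; [|split; [|split]].
    * by move=> v [<-]; right; rewrite /= !inE !eqxx ?orbT.
    * by move=> v [<-]; right; rewrite /= !inE !eqxx ?orbT.
    * by move=> v [<-] [] /eqP; rewrite eq_sym (negbTE kc1).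
    * by move=> w v [<-] [<-]; rewrite lkk lc1; split=> h; discriminate.
  + split; [|split; [|split]].
    * by move=> v [<-]; right; rewrite /= !inE !eqxx ?orbT.
    * by move=> v [<-]; right; rewrite /= !inE !eqxx ?orbT.
    * by move=> v [<-] [] /eqP; rewrite eq_sym (negbTE kc2).
    * by move=> w v [<-] [<-]; rewrite lkk lc2; split=> h; discriminate.
  + split; [|split; [|split]].
    * by move=> v h; left; split; [exact: ue1|].
    * by move=> v [<-]; right; rewrite /= !inE !eqxx ?orbT.
    * move=> v h [ve]; subst v; have /andP[] := ue1 _ h; by rewrite (negbTE c1A).
    * move=> w v h [<-]; rewrite lc1 (labo w (ue1 w h)); split=> h'; last discriminate.
      by move=> _; apply: (N1 _ _ _ e1A h le1 h'); rewrite lg; auto.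
  + split; [|split; [|split]].
    * by move=> v h; left; split; [exact: ue2|].
    * by move=> v [<-]; right; rewrite /= !inE !eqxx ?orbT.
    * move=> v h [ve]; subst v; have /andP[] := ue2 _ h; by rewrite (negbTE c2A).
    * move=> w v h [<-]; rewrite lc2 (labo w (ue2 w h)); split=> h'; last discriminate.
      by move=> _; apply: (N1 _ _ _ e2A h le2 h'); rewrite lg; auto.
  + split; [|split; [|split]].
    * by move=> v h; left; split; [exact: ue3|].
    * by move=> v [<-]; right; rewrite /= !inE !eqxx ?orbT.
    * move=> v h [ve]; subst v; have /andP[] := ue3 _ h; by rewrite (negbTE kkA).
    * move=> w v h [<-]; rewrite lkk (labo w (ue3 w h)); split=> h'; last discriminate.
      by move=> _; apply: (N1 _ _ _ e3A h le3 h'); rewrite lk; auto.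
- have kc1' : kk <> c1 by apply/eqP.
  have kc2' : kk <> c2 by apply/eqP.
  have c12' : c1 <> c2 by apply/eqP.
  move=> n k0 h; rewrite /= !inE in h.
  case/orP: h => [/eqP[-> ->]|/orP[/eqP[-> ->]|/eqP[-> ->]]].
  + exists [:: e3], [:: d1; d2]; do 2 split=> //.
    split=> x u l tin; trips tin; fin ue1 ue2 ue3 ue3 kkA c1A c2A c2A.
  + exists [:: d1; e1], [::]; do 2 split=> //.
    split=> x u l tin; trips tin; fin ue1 ue2 ue3 ue3 kkA c1A c2A c2A.
  + exists [:: d2; e2], [::]; do 2 split=> //.
    split=> x u l tin; trips tin; fin ue1 ue2 ue3 ue3 kkA c1A c2A c2A.
Qed.

Lemma c2_ok A B : Inv A -> normal_w A -> c2_step A B -> Inv B /\ normal_w B.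
Proof.
move=> IA NA [i [k [e3 [e4 [e1 [e2 [iA [kA [li [lk [e1A [e2A [e3A [e4A [e34 [ue3 [ue4 [le4 [e12 [ue1 [ue2
  [g [i1 [i2 [d1 [d2 rp]]]]]]]]]]]]]]]]]]]]]]]]]].
have IA' := IA; case: IA' => [Eu [El [Ar Sl]]].
have NA' := NA; case: NA' => [N1 N2].
have rp' := rp.
case: rp' => [[unV frV] [[unE frE] [hV [hlab [hlabn [hE [hT hU]]]]]]].
have [ai1 ai2] := Ar i iA; rewrite li /= in ai1 ai2.
have [ak1 ak2] := Ar k kA; rewrite lk /= in ak1 ak2.
have lg : lab B g = Ctr by apply: hlabn; rewrite !inE !eqxx ?orbT.
have li1 : lab B i1 = Int by apply: hlabn; rewrite !inE !eqxx ?orbT.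
have li2 : lab B i2 = Int by apply: hlabn; rewrite !inE !eqxx ?orbT.
have fr v : v \in [:: g; i1; i2] -> v \notin fV A by move=> vn; exact: (allP frV v vn).
have gA : g \notin fV A by apply: fr; rewrite !inE eqxx.
have i1A : i1 \notin fV A by apply: fr; rewrite !inE eqxx orbT.
have i2A : i2 \notin fV A by apply: fr; rewrite !inE eqxx !orbT.
move: unV; rewrite /= !inE negb_or => /andP[/andP[gi1 gi2] /andP[i12 _]].
have le3' v : lo A e3 = Some v -> (v \in fV A) && (v \notin [:: i; k]).
  move=> h; rewrite (El _ _ e3A h) /= !inE negb_or; apply/andP; split.
    by apply/eqP=> vg; subst v; exact: (Sl _ _ e3A h ue3).
  apply/eqP=> vk; subst v; move/eqP: e34; apply.
  by apply: (atm1 ak1 (a := e4)); rewrite /= ?e4A ?e3A ?le4 ?h ?eqxx.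
have le1' v : lo A e1 = Some v -> (v \in fV A) && (v \notin [:: i; k]).
  move=> h; rewrite (El _ _ e1A h) /= !inE negb_or; apply/andP; split.
    apply/eqP=> vk; subst v; apply: (atm0 ai1 (x := e1)); by rewrite /= e1A h eqxx.
  by apply/eqP=> vg; subst v; exact: (Sl _ _ e1A h ue1).
have le2' v : lo A e2 = Some v -> (v \in fV A) && (v \notin [:: i; k]).
  move=> h; rewrite (El _ _ e2A h) /= !inE negb_or; apply/andP; split.
    apply/eqP=> vk; subst v; apply: (atm0 ai1 (x := e2)); by rewrite /= e2A h eqxx.
  by apply/eqP=> vg; subst v; exact: (Sl _ _ e2A h ue2).
have labo v : (v \in fV A) && (v \notin [:: i; k]) -> lab B v = lab A v.
  by case/andP=> ??; apply: hlab.
eapply replaced_ok; [exact: IA|exact: NA|exact: rp| | | ].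
- move=> x v xA hx; rewrite !inE => /orP[] /eqP ?; subst v; case: hx => hx.
  + case: (atm2 ai2 e34 (x := x)); rewrite /= ?e3A ?ue3 ?e4A ?ue4 ?xA ?hx ?eqxx //= => ->.
      by right; rewrite ?eqxx ?orbT.
    by left.
  + by exfalso; apply: (atm0 ai1 (x := x)); rewrite /= xA hx eqxx.
  + right; case: (atm2 ak2 e12 (x := x)); rewrite /= ?e1A ?ue1 ?e2A ?ue2 ?xA ?hx ?eqxx //= => ->;
      by rewrite ?eqxx ?orbT.
  + by left; apply/eqP; apply: (atm1 ak1); rewrite /= ?e4A ?le4 ?xA ?hx ?eqxx.
- move=> x u l tin; trips tin.
  + split; [|split; [|split]].
    * by move=> v [<-]; right; rewrite /= !inE !eqxx ?orbT.
    * by move=> v [<-]; right; rewrite /= !inE !eqxx ?orbT.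
    * by move=> v [<-] [] /eqP; rewrite (negbTE gi1).
    * by move=> w v [<-] [<-]; rewrite lg li1; split=> h; discriminate.
  + split; [|split; [|split]].
    * by move=> v [<-]; right; rewrite /= !inE !eqxx ?orbT.
    * by move=> v [<-]; right; rewrite /= !inE !eqxx ?orbT.
    * by move=> v [<-] [] /eqP; rewrite (negbTE gi2).
    * by move=> w v [<-] [<-]; rewrite lg li2; split=> h; discriminate.
  + split; [|split; [|split]].
    * by move=> v [<-]; right; rewrite /= !inE !eqxx ?orbT.
    * by move=> v h; left; split; [exact: le3'|].
    * move=> v [ve] h; subst v; have /andP[] := le3' _ h; by rewrite (negbTE gA).
    * move=> w v [<-] h; rewrite lg (labo v (le3' v h)); split=> h'; first discriminate.
      by move=> _; apply: (N2 _ _ _ e3A h ue3 h'); rewrite li; auto.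
  + split; [|split; [|split]].
    * by move=> v [<-]; right; rewrite /= !inE !eqxx ?orbT.
    * by move=> v h; left; split; [exact: le1'|].
    * move=> v [ve] h; subst v; have /andP[] := le1' _ h; by rewrite (negbTE i1A).
    * move=> w v [<-] h; rewrite li1 (labo v (le1' v h)); split=> h'; first discriminate.
      by move=> _; apply: (N2 _ _ _ e1A h ue1 h'); rewrite lk; auto.
  + split; [|split; [|split]].
    * by move=> v [<-]; right; rewrite /= !inE !eqxx ?orbT.
    * by move=> v h; left; split; [exact: le2'|].
    * move=> v [ve] h; subst v; have /andP[] := le2' _ h; by rewrite (negbTE i2A).
    * move=> w v [<-] h; rewrite li2 (labo v (le2' v h)); split=> h'; first discriminate.
      by move=> _; apply: (N2 _ _ _ e2A h ue2 h'); rewrite lk; auto.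
- have gi1' : g <> i1 by apply/eqP.
  have gi2' : g <> i2 by apply/eqP.
  have i12' : i1 <> i2 by apply/eqP.
  move=> n k0 h; rewrite /= !inE in h.
  case/orP: h => [/eqP[-> ->]|/orP[/eqP[-> ->]|/eqP[-> ->]]].
  + exists [:: d1; d2], [:: e3]; do 2 split=> //.
    split=> x u l tin; trips tin; fin le3' le1' le2' le2' gA i1A i2A i2A.
  + exists [::], [:: d1; e1]; do 2 split=> //.
    split=> x u l tin; trips tin; fin le3' le1' le2' le2' gA i1A i2A i2A.
  + exists [::], [:: d2; e2]; do 2 split=> //.
    split=> x u l tin; trips tin; fin le3' le1' le2' le2' gA i1A i2A i2A.
Qed.

Lemma c3_ok A B : Inv A -> normal_w A -> c3_step A B -> Inv B /\ normal_w B.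
Proof.
move=> IA NA [g [k [e1 [e2 [e [e3 [e4 [gA [kA [lg [lk [e1A [e2A [eA [e3A [e4A [e12 [le1 [le2 [ue [le
  [e34 [ue3 [ue4 [k1 [k2 [g3 [g4 [f13 [f14 [f23 [f24 rp]]]]]]]]]]]]]]]]]]]]]]]]]]]]]]]].
have IA' := IA; case: IA' => [Eu [El [Ar Sl]]].
have NA' := NA; case: NA' => [N1 N2].
have rp' := rp.
case: rp' => [[unV frV] [[unE frE] [hV [hlab [hlabn [hE [hT hU]]]]]]].
have [ag1 ag2] := Ar g gA; rewrite lg /= in ag1 ag2.
have [ak1 ak2] := Ar k kA; rewrite lk /= in ak1 ak2.
have lk1 : lab B k1 = Coctr by apply: hlabn; rewrite !inE !eqxx ?orbT.
have lk2 : lab B k2 = Coctr by apply: hlabn; rewrite !inE !eqxx ?orbT.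
have lg3 : lab B g3 = Ctr by apply: hlabn; rewrite !inE !eqxx ?orbT.
have lg4 : lab B g4 = Ctr by apply: hlabn; rewrite !inE !eqxx ?orbT.
have fr v : v \in [:: k1; k2; g3; g4] -> v \notin fV A by move=> vn; exact: (allP frV v vn).
have k1A : k1 \notin fV A by apply: fr; rewrite !inE eqxx.
have k2A : k2 \notin fV A by apply: fr; rewrite !inE eqxx !orbT.
have g3A : g3 \notin fV A by apply: fr; rewrite !inE eqxx !orbT.
have g4A : g4 \notin fV A by apply: fr; rewrite !inE eqxx !orbT.
have k12 : k1 <> k2 by move=> h; move: unV; rewrite h /= !inE eqxx.
have g34 : g3 <> g4 by move=> h; move: unV; rewrite h /= !inE eqxx /= ?andbF.
have k1g3 : k1 <> g3 by move=> h; move: lk1; rewrite h lg3.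
have k1g4 : k1 <> g4 by move=> h; move: lk1; rewrite h lg4.
have k2g3 : k2 <> g3 by move=> h; move: lk2; rewrite h lg3.
have k2g4 : k2 <> g4 by move=> h; move: lk2; rewrite h lg4.
have tr x u l : (x, u, l) \in [:: (f13, Some k1, Some g3); (f14, Some k1, Some g4);
    (f23, Some k2, Some g3); (f24, Some k2, Some g4)] ++
    [:: (e1, up A e1, Some k1); (e2, up A e2, Some k2);
        (e3, Some g3, lo A e3); (e4, Some g4, lo A e4)] -> up B x = u /\ lo B x = l.
  exact: hT.
have ue1' v : up A e1 = Some v -> (v \in fV A) && (v \notin [:: g; k]).
  move=> h; rewrite (Eu _ _ e1A h) /= !inE negb_or; apply/andP; split.
    by apply/eqP=> vg; subst v; exact: (Sl _ _ e1A le1 h).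
  apply/eqP=> vk; subst v.
  have [u1 _] := tr e1 (up A e1) (Some k1) ltac:(by rewrite !inE !eqxx ?orbT).
  case: (atm2 ak2 e34 (x := e1)); rewrite /= ?e3A ?ue3 ?e4A ?ue4 ?e1A ?h ?eqxx // => ee.
    have [u3 _] := tr e3 (Some g3) (lo A e3) ltac:(by rewrite !inE !eqxx ?orbT).
    rewrite -ee u1 h in u3; case: u3 => gk; by rewrite -gk kA in g3A.
  have [u3 _] := tr e4 (Some g4) (lo A e4) ltac:(by rewrite !inE !eqxx ?orbT).
  rewrite -ee u1 h in u3; case: u3 => gk; by rewrite -gk kA in g4A.
have ue2' v : up A e2 = Some v -> (v \in fV A) && (v \notin [:: g; k]).
  move=> h; rewrite (Eu _ _ e2A h) /= !inE negb_or; apply/andP; split.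
    by apply/eqP=> vg; subst v; exact: (Sl _ _ e2A le2 h).
  apply/eqP=> vk; subst v.
  have [u1 _] := tr e2 (up A e2) (Some k2) ltac:(by rewrite !inE !eqxx ?orbT).
  case: (atm2 ak2 e34 (x := e2)); rewrite /= ?e3A ?ue3 ?e4A ?ue4 ?e2A ?h ?eqxx // => ee.
    have [u3 _] := tr e3 (Some g3) (lo A e3) ltac:(by rewrite !inE !eqxx ?orbT).
    rewrite -ee u1 h in u3; case: u3 => gk; by rewrite -gk kA in g3A.
  have [u3 _] := tr e4 (Some g4) (lo A e4) ltac:(by rewrite !inE !eqxx ?orbT).
  rewrite -ee u1 h in u3; case: u3 => gk; by rewrite -gk kA in g4A.
have le3' v : lo A e3 = Some v -> (v \in fV A) && (v \notin [:: g; k]).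
  move=> h; rewrite (El _ _ e3A h) /= !inE negb_or; apply/andP; split; last first.
    by apply/eqP=> vg; subst v; exact: (Sl _ _ e3A h ue3).
  apply/eqP=> vk; subst v.
  have [_ l3] := tr e3 (Some g3) (lo A e3) ltac:(by rewrite !inE !eqxx ?orbT).
  case: (atm2 ag1 e12 (x := e3)); rewrite /= ?e1A ?le1 ?e2A ?le2 ?e3A ?h ?eqxx // => ee.
    have [_ l1] := tr e1 (up A e1) (Some k1) ltac:(by rewrite !inE !eqxx ?orbT).
    rewrite -ee l3 h in l1; case: l1 => gk; by rewrite -gk gA in k1A.
  have [_ l1] := tr e2 (up A e2) (Some k2) ltac:(by rewrite !inE !eqxx ?orbT).
  rewrite -ee l3 h in l1; case: l1 => gk; by rewrite -gk gA in k2A.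
have le4' v : lo A e4 = Some v -> (v \in fV A) && (v \notin [:: g; k]).
  move=> h; rewrite (El _ _ e4A h) /= !inE negb_or; apply/andP; split; last first.
    by apply/eqP=> vg; subst v; exact: (Sl _ _ e4A h ue4).
  apply/eqP=> vk; subst v.
  have [_ l3] := tr e4 (Some g4) (lo A e4) ltac:(by rewrite !inE !eqxx ?orbT).
  case: (atm2 ag1 e12 (x := e4)); rewrite /= ?e1A ?le1 ?e2A ?le2 ?e4A ?h ?eqxx // => ee.
    have [_ l1] := tr e1 (up A e1) (Some k1) ltac:(by rewrite !inE !eqxx ?orbT).
    rewrite -ee l3 h in l1; case: l1 => gk; by rewrite -gk gA in k1A.
  have [_ l1] := tr e2 (up A e2) (Some k2) ltac:(by rewrite !inE !eqxx ?orbT).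
  rewrite -ee l3 h in l1; case: l1 => gk; by rewrite -gk gA in k2A.
have labo v : (v \in fV A) && (v \notin [:: g; k]) -> lab B v = lab A v.
  by case/andP=> ??; apply: hlab.
eapply replaced_ok; [exact: IA|exact: NA|exact: rp| | | ].
- move=> x v xA hx; rewrite !inE => /orP[] /eqP ?; subst v; case: hx => hx.
  + by left; apply/eqP; apply: (atm1 ag2); rewrite /= ?eA ?ue ?xA ?hx ?eqxx.
  + right; case: (atm2 ag1 e12 (x := x)); rewrite /= ?e1A ?le1 ?e2A ?le2 ?xA ?hx ?eqxx //= => ->;
      by rewrite ?eqxx ?orbT.
  + right; case: (atm2 ak2 e34 (x := x)); rewrite /= ?e3A ?ue3 ?e4A ?ue4 ?xA ?hx ?eqxx //= => ->;
      by rewrite ?eqxx ?orbT.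
  + by left; apply/eqP; apply: (atm1 ak1); rewrite /= ?eA ?le ?xA ?hx ?eqxx.
- move=> x u l tin; trips tin.
  + split; [|split; [|split]].
    * by move=> v [<-]; right; rewrite /= !inE !eqxx ?orbT.
    * by move=> v [<-]; right; rewrite /= !inE !eqxx ?orbT.
    * by move=> v [<-] h; congruence.
    * by move=> w v [<-] [<-]; rewrite lk1 lg3; split=> h; discriminate.
  + split; [|split; [|split]].
    * by move=> v [<-]; right; rewrite /= !inE !eqxx ?orbT.
    * by move=> v [<-]; right; rewrite /= !inE !eqxx ?orbT.
    * by move=> v [<-] h; congruence.
    * by move=> w v [<-] [<-]; rewrite lk1 lg4; split=> h; discriminate.
  + split; [|split; [|split]].
    * by move=> v [<-]; right; rewrite /= !inE !eqxx ?orbT.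
    * by move=> v [<-]; right; rewrite /= !inE !eqxx ?orbT.
    * by move=> v [<-] h; congruence.
    * by move=> w v [<-] [<-]; rewrite lk2 lg3; split=> h; discriminate.
  + split; [|split; [|split]].
    * by move=> v [<-]; right; rewrite /= !inE !eqxx ?orbT.
    * by move=> v [<-]; right; rewrite /= !inE !eqxx ?orbT.
    * by move=> v [<-] h; congruence.
    * by move=> w v [<-] [<-]; rewrite lk2 lg4; split=> h; discriminate.
  + split; [|split; [|split]].
    * by move=> v h; left; split; [exact: ue1'|].
    * by move=> v [<-]; right; rewrite /= !inE !eqxx ?orbT.
    * move=> v h [ve]; subst v; have /andP[] := ue1' _ h; by rewrite (negbTE k1A).
    * move=> w v h [<-]; rewrite lk1 (labo w (ue1' w h)); split=> h'; last discriminate.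
      by move=> _; apply: (N1 _ _ _ e1A h le1 h'); rewrite lg; auto.
  + split; [|split; [|split]].
    * by move=> v h; left; split; [exact: ue2'|].
    * by move=> v [<-]; right; rewrite /= !inE !eqxx ?orbT.
    * move=> v h [ve]; subst v; have /andP[] := ue2' _ h; by rewrite (negbTE k2A).
    * move=> w v h [<-]; rewrite lk2 (labo w (ue2' w h)); split=> h'; last discriminate.
      by move=> _; apply: (N1 _ _ _ e2A h le2 h'); rewrite lg; auto.
  + split; [|split; [|split]].
    * by move=> v [<-]; right; rewrite /= !inE !eqxx ?orbT.
    * by move=> v h; left; split; [exact: le3'|].
    * move=> v [ve] h; subst v; have /andP[] := le3' _ h; by rewrite (negbTE g3A).
    * move=> w v [<-] h; rewrite lg3 (labo v (le3' v h)); split=> h'; first discriminate.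
      by move=> _; apply: (N2 _ _ _ e3A h ue3 h'); rewrite lk; auto.
  + split; [|split; [|split]].
    * by move=> v [<-]; right; rewrite /= !inE !eqxx ?orbT.
    * by move=> v h; left; split; [exact: le4'|].
    * move=> v [ve] h; subst v; have /andP[] := le4' _ h; by rewrite (negbTE g4A).
    * move=> w v [<-] h; rewrite lg4 (labo v (le4' v h)); split=> h'; first discriminate.
      by move=> _; apply: (N2 _ _ _ e4A h ue4 h'); rewrite lk; auto.
- move=> n k0 h; rewrite /= !inE in h.
  case/orP: h => [/eqP[-> ->]|/orP[/eqP[-> ->]|/orP[/eqP[-> ->]|/eqP[-> ->]]]].
  + exists [:: e1], [:: f13; f14]; do 2 split=> //.
    split=> x u l tin; trips tin; fin ue1' ue2' le3' le4' k1A k2A g3A g4A.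
  + exists [:: e2], [:: f23; f24]; do 2 split=> //.
    split=> x u l tin; trips tin; fin ue1' ue2' le3' le4' k1A k2A g3A g4A.
  + exists [:: f13; f23], [:: e3]; do 2 split=> //.
    split=> x u l tin; trips tin; fin ue1' ue2' le3' le4' k1A k2A g3A g4A.
  + exists [:: f14; f24], [:: e4]; do 2 split=> //.
    split=> x u l tin; trips tin; fin ue1' ue2' le3' le4' k1A k2A g3A g4A.
Qed.

Lemma main_inv A B : Inv A -> normal_w A -> c_star A B -> normal_w B.
Proof.
move=> IA NA h; elim: h IA NA => // A0 B0 C0 st _ IH IA NA.
have [IB NB] : Inv B0 /\ normal_w B0.
  by case: st => [s|[s|s]]; [exact: (c1_ok IA NA s) | exact: (c2_ok IA NA s) | exact: (c3_ok IA NA s)].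
exact: IH.
Qed.

Theorem proposition4p20 (A B : flow) :
  atomic_flow A -> normal_w A -> c_star A B -> normal_w B.
Proof.
move=> HA; apply: main_inv; exact: Inv_atomic.
Qed.
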